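(* Let $a,b,c,d>0$, $\mu\in(0,1]$, $u\ge0$, and consider on $\mathcal{I}=[0,1]^2$ the controlled system $$\dot x=x(1-x)\big[xr(-c+d-a+b)+x(a-b)-r(d+b)+b+u\big]+\mu(1-2x),\qquad \dot r=r(1-r)(2x-1).$$ If $u>(c+d)/2$, then on the side $\mathcal{B}_t=\{(x,1):x\in[0,1]\}$ there exists an equilibrium $(x_t^*,1)$ with $x_t^*\in(1/2,1)$, and all other equilibria on $\mathcal{B}_t$ (if any) lie in $\{(x,1):x\in(0,1/2)\}$. *)

(* Defs.v *)
From mathcomp Require Import all_boot all_order all_algebra.
From mathcomp Require Import reals.
Set Implicit Arguments. Unset Strict Implicit. Unset Printing Implicit Defensive.
Import Order.TTheory GRing.Theory Num.Theory.
Local Open Scope ring_scope.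

Definition xdot (R : realType) (a b c d mu u : R) (x r : R) : R :=
  x * (1 - x) * (x * r * (- c + d - a + b) + x * (a - b) - r * (d + b) + b + u)
  + mu * (1 - 2 * x).

Definition rdot (R : realType) (x r : R) : R := r * (1 - r) * (2 * x - 1).

Definition is_equilibrium (R : realType) (a b c d mu u : R) (x r : R) : Prop :=
  xdot a b c d mu u x r = 0 /\ rdot x r = 0.

(* Main.v *)
Require Import Defs.
From mathcomp Require Import all_boot all_order all_algebra.
From mathcomp Require Import reals.
From mathcomp Require Import ring lra.
Import Order.TTheory GRing.Theory Num.Theory.
Local Open Scope ring_scope.

Lemma xdot1 (R : realType) (a b c d mu u x : R) :
  xdot a b c d mu u x 1 = x * (1 - x) * (x * (d - c) + u - d) + mu * (1 - 2 * x).
Proof. rewrite /xdot; ring. Qed.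

Lemma key (R : realType) (A B mu s t : R) : 0 < A -> 0 < mu ->
  0 < s -> s < t -> t < 1/2 ->
  (1/4 - s^+2) * (A + B * s) = 2 * mu * s ->
  (1/4 - t^+2) * (A + B * t) = 2 * mu * t -> False.
Proof.
move=> hA hmu hs hst ht es et.
have ht2 : t ^+ 2 < 1/4 by nra.
have hs2 : s ^+ 2 < 1/4 by nra.
have hBt : 0 < A + B * t by nra.
have hBs : 0 < A + B * s by nra.
have hst4 : s * t < 1/4 by nra.
have D : t * ((1/4 - s^+2) * (A + B * s)) - s * ((1/4 - t^+2) * (A + B * t))
   = (t - s) * (A / 4 + s * t * (A + B * t) + s * t * (B * s)) by field. 
have E : t * ((1/4 - s^+2) * (A + B * s)) - s * ((1/4 - t^+2) * (A + B * t)) = 0.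
  by rewrite es et; ring.
have P : 0 < A / 4 + s * t * (A + B * t) + s * t * (B * s).
  have hst0 : 0 < s * t by apply: mulr_gt0; lra.
  have h1 : 0 < s * t * (A + B * s) by apply: mulr_gt0.
  have h2 : 0 < s * t * (A + B * t) by apply: mulr_gt0.
  have h3 : A * (s * t) < A * (1/4) by rewrite ltr_pM2l.
  have e : A / 4 + s * t * (A + B * t) + s * t * (B * s) =
     A * (1/4) - A * (s * t) + s * t * (A + B * t) + s * t * (A + B * s) by field.
  rewrite e; lra.
have hts : 0 < t - s by lra.
have := mulr_gt0 hts P; rewrite -D E; lra.
Qed.

Theorem lemma18 (R : realType) (a b c d mu u : R)
  (ha : 0 < a) (hb : 0 < b) (hc : 0 < c) (hd : 0 < d)
  (hmu0 : 0 < mu) (hmu1 : mu <= 1) (hu0 : 0 <= u)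
  (hu : (c + d) / 2 < u) :
  exists xs : R,
    [/\ 1 / 2 < xs, xs < 1, is_equilibrium a b c d mu u xs 1 &
        forall x : R, 0 <= x -> x <= 1 -> is_equilibrium a b c d mu u x 1 ->
          x <> xs -> 0 < x /\ x < 1 / 2].
Proof.
set p : {poly R} := - ('X * (1 - 'X) * ('X * (d - c)%:P + (u - d)%:P)
   + mu%:P * (1 - 2%:P * 'X)).
have pE : forall x, p.[x] = - xdot a b c d mu u x 1.
  by move=> x; rewrite xdot1 /p !hornerE.
have A0 : 0 < u - (c + d) / 2 by lra.
have f12 : 0 < xdot a b c d mu u (1/2) 1.
  rewrite xdot1.
  have -> : 1 / 2 * (1 - 1 / 2) * (1 / 2 * (d - c) + u - d) + mu * (1 - 2 * (1 / 2))
     = (u - (c + d) / 2) / 4 :> R by field.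
  lra.
have [xs /andP[h1 h2] rt] : exists2 x, 1/2 <= x <= 1 & root p x.
  apply: poly_ivt; first lra.
  rewrite !pE !xdot1; apply/andP; split.
    have -> : 1 / 2 * (1 - 1 / 2) * (1 / 2 * (d - c) + u - d) + mu * (1 - 2 * (1 / 2))
      = (u - (c + d) / 2) / 4 :> R by field.
    lra.
  have -> : 1 * (1 - 1) * (1 * (d - c) + u - d) + mu * (1 - 2 * 1) = - mu :> R by ring.
  lra.
move/rootP: rt; rewrite pE => /eqP; rewrite oppr_eq0 => /eqP fx.
have xs12 : xs != 1/2 by apply/eqP=> e; move: f12; rewrite -e fx ltxx.
have xs1 : xs != 1.
  apply/eqP=> e; move: fx; rewrite e xdot1.
  have -> : 1 * (1 - 1) * (1 * (d - c) + u - d) + mu * (1 - 2 * 1) = - mu :> R by ring.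
  lra.
have root_eq : forall x, xdot a b c d mu u x 1 = 0 ->
  (1/4 - (x - 1/2)^+2) * ((u - (c+d)/2) + (d - c) * (x - 1/2)) = 2 * mu * (x - 1/2).
  move=> x; rewrite xdot1 => e; apply: subr0_eq.
  by rewrite -[RHS]e; field.
exists xs. split.
- by rewrite lt_neqAle eq_sym xs12.
- by rewrite lt_neqAle xs1.
- by split=> //; rewrite /rdot; ring.
move=> x hx0 hx1 [ex _] nx.
have x0 : x != 0.
  apply/eqP=> e; move: ex; rewrite e xdot1.
  have -> : 0 * (1 - 0) * (0 * (d - c) + u - d) + mu * (1 - 2 * 0) = mu :> R by ring.
  lra.
have [xl|xg] := ltP x (1/2).
  by split=> //; rewrite lt_neqAle eq_sym x0.
have x12 : x != 1/2 by apply/eqP=> e; move: f12; rewrite -e ex ltxx.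
have xx1 : x != 1.
  apply/eqP=> e; move: ex; rewrite e xdot1.
  have -> : 1 * (1 - 1) * (1 * (d - c) + u - d) + mu * (1 - 2 * 1) = - mu :> R by ring.
  lra.
have xg' : 1/2 < x by rewrite lt_neqAle eq_sym x12.
have xl' : x < 1 by rewrite lt_neqAle xx1.
have xsg : 1/2 < xs by rewrite lt_neqAle eq_sym xs12.
have xsl : xs < 1 by rewrite lt_neqAle xs1.
exfalso.
have [lt|gt] := ltP x xs.
  apply: (@key R (u-(c+d)/2) (d-c) mu (x-1/2) (xs-1/2) A0 hmu0); [lra|lra|lra|exact: root_eq|exact: root_eq].
have lt' : xs < x by rewrite lt_neqAle gt andbT; apply/eqP => e; apply: nx; rewrite e.
apply: (@key R (u-(c+d)/2) (d-c) mu (xs-1/2) (x-1/2) A0 hmu0); [lra|lra|lra|exact: root_eq|exact: root_eq].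
Qed.
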